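(* Let $V\subset\mathcal{A}_0$ be compact. Then for every $f\in V$ there exist $g\in\mathrm{bor}(V)$ and $x\in\overline D$ such that $f=P_xg$. Moreover, if $f\not\equiv e$ and $f=P_xg=P_yh$ with $g,h\in\mathrm{bor}(V)$ and $x,y\in\overline D$, then $h=P_ug$ for some $u$ with $|u|=1$.
   Context: $D=\{z:|z|<1\}$, $\overline D$ its closure. $\mathcal{A}$ is the space of functions $f(z)=\sum_{k\ge0}a_k(f)z^k$ analytic in $D$, with the topology of locally uniform convergence; $\mathcal{A}_0=\{f\in\mathcal{A}: a_0(f)=1\}$. For $x\in\overline D$, $(P_xf)(z)=f(xz)$. Let $e\equiv1$. If $V\ne\{e\}$, an element $f\in V$ is a border element of $V$ if whenever $f=P_xg$ with $g\in V$, $x\in\overline D$, then $|x|=1$; $\mathrm{bor}(V)$ is the set of border elements. If $V=\{e\}$, $\mathrm{bor}(V)=\{e\}$. *)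

(* Defs.v *)
(* Elements of the space A of analytic functions on
   the unit disc are represented by their Taylor coefficient sequences
   a : nat -> C, f(z) = sum_k a k z^k, required to converge on D. *)
From Stdlib Require Import Reals.
From Coquelicot Require Import Coquelicot.
Open Scope R_scope.

Definition coef := nat -> C.

Definition inA (f : coef) : Prop :=
  forall z : C, Cmod z < 1 -> ex_series (fun k => Cmult (f k) (Cpow z k)).

Definition inA0 (f : coef) : Prop := inA f /\ f 0%nat = RtoC 1.

Definition e_fun : coef := fun k => match k with O => RtoC 1 | S _ => RtoC 0 end.

(* (P_x f)(z) = f(xz), i.e. coefficients x^k a_k(f) *)
Definition P (x : C) (f : coef) : coef := fun k => Cmult (Cpow x k) (f k).

Definition eval_is (f : coef) (z w : C) : Prop :=
  is_series (fun k => Cmult (f k) (Cpow z k)) w.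

Definition lu_near (f : coef) (r eps : R) (g : coef) : Prop :=
  forall z u v, Cmod z <= r -> eval_is f z u -> eval_is g z v ->
    Cmod (Cminus v u) < eps.

(* open subsets of A for the topology of locally uniform convergence in D *)
Definition openA (U : coef -> Prop) : Prop :=
  forall f, U f -> inA f /\
    exists r eps, 0 <= r < 1 /\ 0 < eps /\
      forall g, inA g -> lu_near f r eps g -> U g.

Definition compactA (V : coef -> Prop) : Prop :=
  (forall f, V f -> inA f) /\
  forall (I : Type) (O : I -> coef -> Prop),
    (forall i, openA (O i)) ->
    (forall f, V f -> exists i, O i f) ->
    exists l : list I, forall f, V f -> exists i, List.In i l /\ O i f.

Definition is_e_singleton (V : coef -> Prop) : Prop :=
  forall h, V h <-> h = e_fun.

Definition bor (V : coef -> Prop) (f : coef) : Prop :=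
  (is_e_singleton V /\ f = e_fun) \/
  (~ is_e_singleton V /\ V f /\
    forall (g : coef) (x : C), V g -> Cmod x <= 1 -> f = P x g -> Cmod x = 1).

(* Main.v *)
Require Import Defs.
From Stdlib Require Import Reals.
From Coquelicot Require Import Coquelicot.
From Stdlib Require Import Lra Lia Classical FunctionalExtensionality IndefiniteDescription List.
Open Scope R_scope.

Lemma P_comp x y h : P x (P y h) = P (Cmult x y) h.
Proof. apply functional_extensionality; intro k; unfold P. rewrite Cpow_mult_l. ring. Qed.

Lemma P_one h : P (RtoC 1) h = h.
Proof. apply functional_extensionality; intro k; unfold P. rewrite Cpow_1_l. ring. Qed.

Lemma P_zero g : g 0%nat = RtoC 1 -> P (RtoC 0) g = e_fun.
Proof. intro H. apply functional_extensionality; intros [|k]; unfold P, e_fun; simpl.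
 rewrite H; ring. ring. Qed.

Lemma inA0_of V h : (forall f, V f -> inA0 f) -> V h -> h 0%nat = RtoC 1.
Proof. intros H Vh. apply (H h Vh). Qed.

Lemma Cmod_mult_le1 x y : Cmod x <= 1 -> Cmod y <= 1 -> Cmod (Cmult x y) <= 1.
Proof. intros; rewrite Cmod_mult.
 pose proof (Cmod_ge_0 x); pose proof (Cmod_ge_0 y). nra. Qed.

Lemma part2 (V : coef -> Prop) :
  (forall f, V f -> inA0 f) ->
  (forall (f g h : coef) (x y : C), V f -> f <> e_fun ->
     bor V g -> bor V h -> Cmod x <= 1 -> Cmod y <= 1 ->
     f = P x g -> f = P y h ->
     exists u : C, Cmod u = 1 /\ h = P u g).
Proof.
 intros HV f g h x y Vf Hne Bg Bh Hx Hy Hfg Hfh.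
 destruct Bg as [[Hs _]|[_ [Vg Bg]]]. { apply Hs in Vf; contradiction. }
 destruct Bh as [[Hs _]|[_ [Vh Bh]]]. { apply Hs in Vf; contradiction. }
 assert (Hx0 : x <> RtoC 0).
 { intro E; subst x. apply Hne. rewrite Hfg. apply P_zero. apply (inA0_of V g HV Vg). }
 assert (Hy0 : y <> RtoC 0).
 { intro E; subst y. apply Hne. rewrite Hfh. apply P_zero. apply (inA0_of V h HV Vh). }
 assert (Ex : forall a b (u v : coef), b <> RtoC 0 -> P a u = P b v -> v = P (Cdiv a b) u).
 { intros a b u v Hb E. apply functional_extensionality; intro k.
   assert (E2 := f_equal (fun F => F k) E). unfold P in *. simpl in E2.
   assert (Hbk := Cpow_nz b k Hb).
   unfold Cdiv. rewrite Cpow_mult_l, Cpow_inv by exact Hb.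
   replace (v k) with (Cmult (Cinv (Cpow b k)) (Cmult (Cpow b k) (v k))) by (field; auto).
   rewrite <- E2. field. auto. }
 destruct (Rle_or_lt (Cmod x) (Cmod y)) as [Hle|Hlt].
 - exists (Cdiv x y). assert (Eh : h = P (Cdiv x y) g) by (apply Ex; auto; congruence).
   split; auto. apply (Bh g); auto.
   rewrite Cmod_div by auto. apply Rmult_le_reg_r with (Cmod y).
   assert (0 < Cmod y) by (apply Cmod_gt_0; auto). auto.
   field_simplify. lra. apply Rgt_not_eq, Cmod_gt_0; auto.
 - exfalso. assert (Eg : g = P (Cdiv y x) h) by (apply Ex; auto; congruence).
   assert (0 < Cmod x) by (apply Cmod_gt_0; auto).
   assert (Cmod (Cdiv y x) = 1).
   { apply (Bg h); auto. rewrite Cmod_div by auto.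
     apply Rmult_le_reg_r with (Cmod x); auto. field_simplify; lra. }
   rewrite Cmod_div in H0 by auto. apply (f_equal (fun t => t * Cmod x)) in H0.
   field_simplify in H0; lra.
Qed.

Lemma series_C_iff (a : nat -> C) (l : C) :
  is_series a l <-> forall eps, 0 < eps -> exists N, forall n, (N <= n)%nat -> Cmod (Cminus (sum_n a n) l) < eps.
Proof.
 unfold is_series. rewrite (filterlim_locally_ball_norm (K:=C_AbsRing) (U:=C_NormedModule)). split.
 - intros H eps Heps. destruct (H (mkposreal eps Heps)) as [N HN]. exists N. intros n Hn. apply (HN n Hn).
 - intros H eps. destruct (H eps (cond_pos eps)) as [N HN]. exists N. intros n Hn. apply (HN n Hn).
Qed.

Lemma series_C_unique (a : nat -> C) l1 l2 : is_series a l1 -> is_series a l2 -> l1 = l2.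
Proof. intros H1 H2. exact (filterlim_locally_unique (F:=eventually) (sum_n a) l1 l2 H1 H2). Qed.

Lemma eval_exists h z : inA h -> Cmod z < 1 -> exists w, eval_is h z w.
Proof. intros H Hz. destruct (H z Hz) as [w Hw]. exists w. exact Hw. Qed.

Lemma eval_unique h z w1 w2 : eval_is h z w1 -> eval_is h z w2 -> w1 = w2.
Proof. apply series_C_unique. Qed.

Lemma lu_near_refl h r eps : 0 < eps -> lu_near h r eps h.
Proof. intros He z u v _ Hu Hv. rewrite (eval_unique h z u v Hu Hv).
 replace (Cminus v v) with (RtoC 0) by ring. rewrite Cmod_0. exact He. Qed.

Lemma lu_near_trans h1 h2 h3 r e1 e2 : r < 1 -> inA h2 ->
  lu_near h1 r e1 h2 -> lu_near h2 r e2 h3 -> lu_near h1 r (e1 + e2) h3.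
Proof. intros Hr H2 N1 N2 z u v Hz Hu Hv.
 destruct (eval_exists h2 z H2) as [w Hw]. lra.
 specialize (N1 z u w Hz Hu Hw). specialize (N2 z w v Hz Hw Hv).
 replace (Cminus v u) with (Cplus (Cminus v w) (Cminus w u)) by ring.
 eapply Rle_lt_trans. apply Cmod_triangle. lra. Qed.

Definition IntA (B : coef -> Prop) (h : coef) : Prop :=
  inA h /\ exists r eps, 0 <= r < 1 /\ 0 < eps /\ forall h', inA h' -> lu_near h r eps h' -> B h'.

Lemma IntA_open B : openA (IntA B).
Proof. intros h [Hh [r [eps [Hr [He HB]]]]]. split; auto.
 exists r, (eps/2). split; auto. split. lra.
 intros g Hg Ng. split; auto. exists r, (eps/2). split; auto. split. lra.
 intros h' Hh' N'. apply HB; auto. replace eps with (eps/2 + eps/2) by field.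
 apply lu_near_trans with g; auto. lra. Qed.

Lemma IntA_sub B h : IntA B h -> B h.
Proof. intros [Hh [r [eps [Hr [He HB]]]]]. apply HB; auto. apply lu_near_refl; auto. Qed.

Record idx := mkidx { ig : coef; ir : R; ie : R; iN : nat }.

Fixpoint maxN (l : list idx) : nat := match l with nil => 0%nat | cons i l => Nat.max (iN i) (maxN l) end.

Lemma maxN_ge l i : In i l -> (iN i <= maxN l)%nat.
Proof. induction l; simpl; intros H. contradiction. destruct H. subst; lia. specialize (IHl H); lia. Qed.

Lemma cluster (V : coef -> Prop) (H : nat -> coef) : compactA V -> (forall n, V (H n)) ->
  exists g, V g /\ forall r eps N, 0 <= r < 1 -> 0 < eps -> exists n, (N <= n)%nat /\ lu_near g r eps (H n).
Proof.
 intros [HA HC] HV. apply NNPP; intro Hn.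
 assert (Hg : forall g, V g -> exists r eps N, (0 <= r < 1 /\ 0 < eps) /\ forall n, (N <= n)%nat -> ~ lu_near g r eps (H n)).
 { intros g Vg. apply NNPP; intro C. apply Hn. exists g. split; auto.
   intros r eps N Hr He. apply NNPP; intro C2. apply C. exists r, eps, N. split; auto.
   intros n Hn2 Hl. apply C2. exists n; auto. }
 set (good := fun i : idx => V (ig i) /\ (0 <= ir i < 1 /\ 0 < ie i) /\ forall n, (iN i <= n)%nat -> ~ lu_near (ig i) (ir i) (ie i) (H n)).
 set (O := fun i : {i : idx | good i} => IntA (lu_near (ig (proj1_sig i)) (ir (proj1_sig i)) (ie (proj1_sig i)))).
 destruct (HC {i : idx | good i} O) as [l Hl].
 - intros i. apply IntA_open.
 - intros f Vf. destruct (Hg f Vf) as [r [eps [N [Hre HN]]]].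
   assert (Gi : good (mkidx f r eps N)) by (split; auto).
   exists (exist _ _ Gi). unfold O; simpl. split; auto. exists r, eps. destruct Hre; split; auto.
 - destruct (Hl (H (maxN (map (@proj1_sig _ _) l))) (HV _)) as [i [Il Oi]].
   apply IntA_sub in Oi. destruct i as [i Gi]. simpl in Oi.
   apply (proj2 (proj2 Gi) (maxN (map (@proj1_sig _ _) l))); auto.
   apply maxN_ge. change i with (proj1_sig (exist good i Gi)). apply in_map. exact Il.
Qed.

Lemma le_eps a b : (forall eps, 0 < eps -> a < b + eps) -> a <= b.
Proof. intros H. apply Rnot_lt_le; intro. specialize (H ((a-b)/2)). lra. Qed.

Fixpoint csum (F : nat -> C) (n : nat) : C :=
  match n with O => RtoC 0 | S n => Cplus (csum F n) (F n) end.

Lemma csum_ext F G n : (forall j, F j = G j) -> csum F n = csum G n.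
Proof. intros H; induction n; simpl; auto. rewrite IHn, H; auto. Qed.

Lemma csum_scal a F n : csum (fun j => Cmult a (F j)) n = Cmult a (csum F n).
Proof. induction n; simpl. ring. rewrite IHn. ring. Qed.

Lemma csum_bound F n Bd : (forall j, Cmod (F j) <= Bd) -> Cmod (csum F n) <= INR n * Bd.
Proof. intros H; induction n; simpl csum. rewrite Cmod_0; simpl; lra.
 eapply Rle_trans. apply Cmod_triangle. rewrite S_INR. specialize (H n). lra. Qed.

Lemma is_series_csum (a : nat -> nat -> C) (l : nat -> C) n :
 (forall j, is_series (a j) (l j)) -> is_series (fun m => csum (fun j => a j m) n) (csum l n).
Proof.
 intros H. induction n; simpl.
 - assert (H0 := is_series_scal (K:=C_AbsRing) (V:=C_NormedModule) (RtoC 0) _ _ (H O)).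
   eapply is_series_ext; [|replace (RtoC 0) with (scal (RtoC 0) (l O)); [exact H0|]].
   intros m; simpl. change (Cmult (RtoC 0) (a O m) = RtoC 0). ring.
   change (Cmult (RtoC 0) (l O) = RtoC 0). ring.
 - exact (is_series_plus (K:=C_AbsRing) (V:=C_NormedModule) _ _ _ _ IHn (H n)).
Qed.

Definition om (N : nat) : C := (cos (2*PI/INR N), sin (2*PI/INR N)).

Lemma om_pow N n : Cpow (om N) n = (cos (2*PI*INR n/INR N), sin (2*PI*INR n/INR N)).
Proof.
 induction n.
 - replace (2*PI*INR 0/INR N) with 0 by (simpl; unfold Rdiv; ring). rewrite cos_0, sin_0. reflexivity.
 - rewrite Cpow_S, IHn.
   replace (2*PI*INR (S n)/INR N) with (2*PI/INR N + 2*PI*INR n/INR N) by (rewrite S_INR; unfold Rdiv; ring).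
   rewrite cos_plus, sin_plus. unfold om, Cmult; simpl. f_equal; ring.
Qed.

Lemma Cmod_cs t : Cmod (cos t, sin t) = 1.
Proof. unfold Cmod; simpl. pose proof (sin2_cos2 t). unfold Rsqr in H. replace (cos t * (cos t * 1) + sin t * (sin t * 1)) with 1 by lra. apply sqrt_1. Qed.

Lemma Cmod_om_pow N n : Cmod (Cpow (om N) n) = 1.
Proof. rewrite om_pow. apply Cmod_cs. Qed.

Lemma om_N N : (1 <= N)%nat -> Cpow (om N) N = RtoC 1.
Proof. intros H. rewrite om_pow. assert (0 < INR N) by (apply lt_0_INR; lia).
 replace (2*PI*INR N/INR N) with (2*PI) by (field; lra). rewrite cos_2PI, sin_2PI. reflexivity. Qed.

Lemma om_ne1 N p : (0 < p < N)%nat -> Cpow (om N) p <> RtoC 1.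
Proof. intros H E. rewrite om_pow in E. injection E; intros Es Ec.
 assert (0 < INR N) by (apply lt_0_INR; lia).
 assert (0 < INR p) by (apply lt_0_INR; lia).
 assert (INR p < INR N) by (apply lt_INR; lia).
 set (t := 2*PI*INR p/INR N) in *.
 assert (Ht : t * INR N = 2*PI*INR p) by (unfold t; field; lra).
 pose proof PI_RGT_0.
 assert (0 < t) by (unfold t; apply Rdiv_lt_0_compat; nra).
 assert (t < 2*PI) by nra.
 destruct (Rtotal_order t PI) as [h|[h|h]].
 - pose proof (sin_gt_0 t H4 h). lra.
 - rewrite h, cos_PI in Ec. lra.
 - pose proof (sin_lt_0 t h H5). lra.
Qed.

Lemma pow_om_pow_N N p : (1 <= N)%nat -> Cpow (Cpow (om N) p) N = RtoC 1.
Proof. intros H. rewrite <- Cpow_mult_r, Nat.mul_comm, Cpow_mult_r, om_N by auto. apply Cpow_1_l. Qed.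

Lemma geom (z : C) n : Cmult (csum (fun j => Cpow z j) n) (Cminus z (RtoC 1)) = Cminus (Cpow z n) (RtoC 1).
Proof. induction n; simpl csum. simpl. ring.
 rewrite Cpow_S. transitivity (Cplus (Cmult (csum (fun j => Cpow z j) n) (Cminus z (RtoC 1))) (Cmult (Cpow z n) (Cminus z (RtoC 1)))). ring.
 rewrite IHn. ring. Qed.

Lemma geom0 z n : z <> RtoC 1 -> Cpow z n = RtoC 1 -> csum (fun j => Cpow z j) n = RtoC 0.
Proof. intros Hz Hn. pose proof (geom z n) as G. rewrite Hn in G.
 assert (Hz1 : Cminus z (RtoC 1) <> RtoC 0). { intro E. apply Hz. replace z with (Cplus (Cminus z (RtoC 1)) (RtoC 1)) by ring. rewrite E. ring. }
 replace (csum (fun j => Cpow z j) n) with (Cmult (Cmult (csum (fun j => Cpow z j) n) (Cminus z (RtoC 1))) (Cinv (Cminus z (RtoC 1)))) by (field; auto).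
 rewrite G. ring. Qed.

Lemma csum_one n : csum (fun j => Cpow (RtoC 1) j) n = RtoC (INR n).
Proof. induction n; simpl csum. reflexivity. rewrite IHn, Cpow_1_l, S_INR, RtoC_plus. reflexivity. Qed.

Lemma terms_to_0 (a : nat -> C) l : is_series a l -> forall eps, 0 < eps -> exists N, forall n, (N <= n)%nat -> Cmod (a n) < eps.
Proof.
 intros H eps He. destruct (proj1 (series_C_iff a l) H (eps/2)) as [N HN]. lra.
 exists (S N). intros [|m] Hm. lia.
 replace (a (S m)) with (Cplus (Cminus (sum_n a (S m)) l) (Copp (Cminus (sum_n a m) l))).
 2:{ replace (sum_n a (S m)) with (Cplus (sum_n a m) (a (S m))) by (rewrite sum_Sn; reflexivity). ring. }
 eapply Rle_lt_trans. apply Cmod_triangle. rewrite Cmod_opp.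
 pose proof (HN (S m) ltac:(lia)). pose proof (HN m ltac:(lia)). lra.
Qed.

Lemma tail_geom (d : coef) r : inA d -> 0 < r < 1 ->
  exists q m0, 0 <= q < 1 /\ forall m, (m0 <= m)%nat -> Cmod (d m) * r ^ m <= q ^ m.
Proof.
 intros Hd Hr. set (r' := (1 + r)/2).
 assert (Hr' : Cmod (RtoC r') < 1) by (rewrite Cmod_R, Rabs_pos_eq; unfold r'; lra).
 destruct (Hd _ Hr') as [l Hl].
 destruct (terms_to_0 _ _ Hl 1 Rlt_0_1) as [m0 Hm0].
 exists (r / r'), m0. split. split. apply Rdiv_le_0_compat; unfold r'; lra.
 apply Rmult_lt_reg_r with r'. unfold r'; lra. unfold Rdiv. rewrite Rmult_assoc, Rinv_l. unfold r'; lra. unfold r'; lra.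
 intros m Hm. specialize (Hm0 m Hm). rewrite Cmod_mult, Cmod_pow, Cmod_R, Rabs_pos_eq in Hm0 by (unfold r'; lra).
 replace r with (r / r' * r') at 1 by (field; unfold r'; lra).
 rewrite Rpow_mult_distr. pose proof (pow_le (r/r') m ltac:(apply Rdiv_le_0_compat; unfold r'; lra)).
 pose proof (Cmod_ge_0 (d m)). nra.
Qed.

Lemma cauchy_N (d : coef) (k : nat) (r M q : R) (m0 N : nat) : inA d -> 0 < r < 1 ->
 (forall z w, Cmod z = r -> eval_is d z w -> Cmod w <= M) ->
 0 <= q < 1 -> (forall m, (m0 <= m)%nat -> Cmod (d m) * r ^ m <= q ^ m) ->
 (m0 <= N)%nat -> (k < N)%nat ->
 Cmod (d k) * r ^ k <= M + q ^ N / (1 - q).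
Proof.
 intros Hd Hr HM Hq Hm0 HN HkN.
 set (w0 := om N).
 set (z := fun j => Cmult (RtoC r) (Cpow w0 j)).
 assert (Hz : forall j, Cmod (z j) = r).
 { intro j; unfold z. rewrite Cmod_mult, Cmod_R, Rabs_pos_eq by lra. unfold w0; rewrite Cmod_om_pow. ring. }
 assert (Hw : forall j, {w | eval_is d (z j) w}).
 { intro j. apply constructive_indefinite_description. apply eval_exists; auto. rewrite Hz; lra. }
 set (w := fun j => proj1_sig (Hw j)).
 assert (Hwj : forall j, eval_is d (z j) (w j)) by (intro j; unfold w; exact (proj2_sig (Hw j))).
 set (c := fun j => Cpow (Cpow w0 (N - k)) j).
 set (B := csum (fun j => Cmult (c j) (w j)) N).
 set (e := fun m => Cmult (Cmult (d m) (RtoC (r ^ m))) (csum (fun j => Cpow (Cpow w0 (m + (N - k))) j) N)).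
 assert (Hser : is_series e B).
 { apply (is_series_ext (fun m => csum (fun j => Cmult (c j) (Cmult (d m) (Cpow (z j) m))) N)).
   - intro m. unfold e. rewrite <- csum_scal. apply csum_ext. intro j. unfold c, z.
     rewrite Cpow_mult_l, <- RtoC_pow, Cpow_add_r, Cpow_mult_l.
     rewrite <- !Cpow_mult_r. rewrite (Nat.mul_comm j m). ring.
   - apply (is_series_csum (fun j m => Cmult (c j) (Cmult (d m) (Cpow (z j) m)))).
     intro j. exact (is_series_scal (K:=C_AbsRing) (V:=C_NormedModule) (c j) _ _ (Hwj j)). }
 assert (HN1 : (1 <= N)%nat) by lia.
 assert (Hek : e k = Cmult (Cmult (d k) (RtoC (r ^ k))) (RtoC (INR N))).
 { unfold e. replace (k + (N - k))%nat with N by lia. unfold w0. rewrite (om_N N HN1). rewrite csum_one. reflexivity. }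
 assert (He0 : forall m, (m < N)%nat -> m <> k -> e m = RtoC 0).
 { intros m Hm Hmk. unfold e. rewrite geom0. ring.
   - unfold w0. destruct (Compare_dec.lt_dec m k).
     + apply om_ne1. lia.
     + replace (m + (N - k))%nat with (N + (m - k))%nat by lia. rewrite Cpow_add_r, om_N by lia.
       replace (Cmult (RtoC 1) (Cpow (om N) (m-k))) with (Cpow (om N) (m-k)) by ring. apply om_ne1; lia.
   - unfold w0. apply pow_om_pow_N; lia. }
 assert (Hebd : forall m, Cmod (e m) <= Cmod (d m) * r ^ m * INR N).
 { intro m. unfold e. rewrite !Cmod_mult, Cmod_R, Rabs_pos_eq by (apply pow_le; lra).
   apply Rmult_le_compat_l. pose proof (Cmod_ge_0 (d m)); pose proof (pow_le r m); nra.
   replace (INR N) with (INR N * 1) by ring. apply csum_bound. intro j. rewrite <- Cpow_mult_r. unfold w0; rewrite Cmod_om_pow. lra. }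
 assert (Hps1 : forall n, (n < N)%nat -> sum_n e n = if Compare_dec.le_lt_dec k n then e k else RtoC 0).
 { induction n; intros Hn.
   - rewrite sum_O. destruct (Compare_dec.le_lt_dec k 0). replace k with 0%nat by lia. reflexivity. apply He0; lia.
   - replace (sum_n e (S n)) with (Cplus (sum_n e n) (e (S n))) by (rewrite sum_Sn; reflexivity).
     rewrite IHn by lia. destruct (Compare_dec.le_lt_dec k n); destruct (Compare_dec.le_lt_dec k (S n)); try lia.
     + rewrite (He0 (S n)) by lia. apply Cplus_0_r.
     + replace k with (S n) by lia. apply Cplus_0_l.
     + rewrite (He0 (S n)) by lia. apply Cplus_0_l. }
 assert (Hq1 : 0 < 1 - q) by lra.
 assert (Hps2 : forall i, Cmod (Cminus (sum_n e (N + i)) (e k)) <= INR N * (q ^ N - q ^ (S (N + i))) / (1 - q)).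
 { induction i.
   - destruct N as [|N']. lia.
     replace (S N' + 0)%nat with (S N') by lia.
     replace (sum_n e (S N')) with (Cplus (sum_n e N') (e (S N'))) by (rewrite sum_Sn; reflexivity).
     rewrite Hps1 by lia. destruct (Compare_dec.le_lt_dec k N'); [|lia].
     replace (Cminus (Cplus (e k) (e (S N'))) (e k)) with (e (S N')) by ring.
     eapply Rle_trans. apply Hebd.
     specialize (Hm0 (S N') HN).
     replace (q ^ S (S N')) with (q * q ^ S N') by reflexivity.
     replace (INR (S N') * (q ^ S N' - q * q ^ S N') / (1 - q)) with (INR (S N') * q ^ S N') by (field; lra).
     pose proof (pos_INR (S N')). nra.
   - replace (N + S i)%nat with (S (N + i)) by lia.
     replace (sum_n e (S (N + i))) with (Cplus (sum_n e (N + i)) (e (S (N + i)))) by (rewrite sum_Sn; reflexivity).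
     replace (Cminus (Cplus (sum_n e (N + i)) (e (S (N + i)))) (e k)) with (Cplus (Cminus (sum_n e (N + i)) (e k)) (e (S (N + i)))) by ring.
     eapply Rle_trans. apply Cmod_triangle.
     pose proof (Hebd (S (N + i))). pose proof (Hm0 (S (N + i)) ltac:(lia)).
     replace (q ^ S (S (N + i))) with (q * q ^ S (N + i)) by reflexivity.
     assert (E1 : INR N * (q ^ N - q * q ^ S (N + i)) / (1 - q) = INR N * (q ^ N - q ^ S (N + i)) / (1 - q) + INR N * q ^ S (N + i)) by (field; lra).
     rewrite E1. pose proof (pos_INR N). nra. }
 assert (Hlim : Cmod (Cminus B (e k)) <= INR N * q ^ N / (1 - q)).
 { apply le_eps. intros eps Heps. destruct (proj1 (series_C_iff e B) Hser eps Heps) as [N1 HN1'].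
   specialize (HN1' (N + N1)%nat ltac:(lia)). specialize (Hps2 N1).
   replace (Cminus B (e k)) with (Cplus (Copp (Cminus (sum_n e (N + N1)) B)) (Cminus (sum_n e (N + N1)) (e k))) by ring.
   eapply Rle_lt_trans. apply Cmod_triangle. rewrite Cmod_opp.
   assert (INR N * (q ^ N - q ^ S (N + N1)) / (1 - q) <= INR N * q ^ N / (1 - q)).
   { unfold Rdiv. apply Rmult_le_compat_r. left; apply Rinv_0_lt_compat; lra. pose proof (pos_INR N). pose proof (pow_le q (S (N+N1)) ltac:(lra)). nra. }
   lra. }
 assert (HB : Cmod B <= INR N * M).
 { unfold B. apply csum_bound. intro j. rewrite Cmod_mult. unfold c. rewrite <- Cpow_mult_r. unfold w0. rewrite Cmod_om_pow. rewrite Rmult_1_l. apply (HM (z j)); auto. }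
 assert (HNpos : 0 < INR N) by (apply lt_0_INR; lia).
 assert (H : Cmod (e k) <= INR N * M + INR N * q ^ N / (1 - q)).
 { replace (e k) with (Cplus B (Copp (Cminus B (e k)))) by ring. eapply Rle_trans. apply Cmod_triangle. rewrite Cmod_opp. lra. }
 rewrite Hek, !Cmod_mult, !Cmod_R in H. rewrite (Rabs_pos_eq (r^k)) in H by (apply pow_le; lra).
 rewrite (Rabs_pos_eq (INR N)) in H by apply pos_INR.
 apply Rmult_le_reg_r with (INR N); auto.
 replace ((M + q ^ N / (1 - q)) * INR N) with (INR N * M + INR N * q ^ N / (1 - q)) by (field; lra). exact H.
Qed.

Lemma cauchy_est (d : coef) (k : nat) (r M : R) : inA d -> 0 < r < 1 ->
 (forall z w, Cmod z = r -> eval_is d z w -> Cmod w <= M) -> Cmod (d k) * r ^ k <= M.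
Proof.
 intros Hd Hr HM. destruct (tail_geom d r Hd Hr) as [q [m0 [Hq Hm0]]].
 apply le_eps. intros eps Heps.
 destruct (pow_lt_1_zero q ltac:(rewrite Rabs_pos_eq; lra) (eps * (1 - q)) ltac:(apply Rmult_lt_0_compat; lra)) as [N1 HN1].
 set (N := Nat.max N1 (Nat.max m0 (S k))).
 pose proof (cauchy_N d k r M q m0 N Hd Hr HM Hq Hm0 ltac:(unfold N; lia) ltac:(unfold N; lia)).
 specialize (HN1 N ltac:(unfold N; lia)). rewrite Rabs_pos_eq in HN1 by (apply pow_le; lra).
 assert (q ^ N / (1 - q) < eps). { apply Rmult_lt_reg_r with (1 - q). lra. unfold Rdiv. rewrite Rmult_assoc, Rinv_l by lra. lra. }
 lra.
Qed.

Lemma coef_cont f k δ : inA f -> 0 < δ -> exists r eps, 0 <= r < 1 /\ 0 < eps /\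
  forall g, inA g -> lu_near f r eps g -> Cmod (Cminus (g k) (f k)) < δ.
Proof.
 intros Hf Hd. exists (1/2), (δ/2 * (1/2)^k). split. lra. split. apply Rmult_lt_0_compat. lra. apply pow_lt; lra.
 intros g Hg Hn. set (d := fun m => Cminus (g m) (f m)).
 assert (Hev : forall z u v, eval_is f z u -> eval_is g z v -> eval_is d z (Cminus v u)).
 { intros z u v Hu Hv. unfold eval_is, d.
   eapply is_series_ext; [| exact (is_series_minus (K:=C_AbsRing) (V:=C_NormedModule) _ _ _ _ Hv Hu)].
   intro m. simpl. change (Cplus (Cmult (g m) (Cpow z m)) (Copp (Cmult (f m) (Cpow z m))) = Cmult (Cminus (g m) (f m)) (Cpow z m)). ring. }
 assert (Hd' : inA d).
 { intros z Hz. destruct (eval_exists f z Hf Hz) as [u Hu]. destruct (eval_exists g z Hg Hz) as [v Hv]. exists (Cminus v u). apply Hev; auto. }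
 assert (Hb := cauchy_est d k (1/2) (δ/2 * (1/2)^k) Hd' ltac:(lra)).
 assert (H : Cmod (d k) * (1/2)^k <= δ/2 * (1/2)^k).
 { apply Hb. intros z w Hz Hw. destruct (eval_exists f z Hf ltac:(lra)) as [u Hu]. destruct (eval_exists g z Hg ltac:(lra)) as [v Hv].
   rewrite (eval_unique d z w (Cminus v u) Hw (Hev z u v Hu Hv)). left. apply (Hn z u v); [lra|auto|auto]. }
 assert (H0 : 0 < (1/2)^k) by (apply pow_lt; lra).
 assert (H1 : Cmod (d k) <= δ/2) by (apply Rmult_le_reg_r with ((1/2)^k); auto).
 unfold d in H1. lra.
Qed.

Lemma incr_ge (phi : nat -> nat) : (forall n, (phi n < phi (S n))%nat) -> forall n, (n <= phi n)%nat.
Proof. intros H n; induction n. lia. specialize (H n). lia. Qed.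

Lemma incr_mono (phi : nat -> nat) : (forall n, (phi n < phi (S n))%nat) -> forall n m, (n <= m)%nat -> (phi n <= phi m)%nat.
Proof. intros H n m Hnm; induction Hnm. lia. specialize (H m). lia. Qed.

Lemma extract_R (u : nat -> R) : (forall n, -1 <= u n <= 1) ->
  exists (phi : nat -> nat) l, (forall n, (phi n < phi (S n))%nat) /\
   forall eps, 0 < eps -> exists N, forall n, (N <= n)%nat -> Rabs (u (phi n) - l) < eps.
Proof.
 intros Hu. destruct (Bolzano_Weierstrass u (fun c => -1 <= c <= 1) (compact_P3 (-1) 1) Hu) as [l Hl].
 assert (Hs : forall n N, {p | (N <= p)%nat /\ Rabs (u p - l) < / INR (S n)}).
 { intros n N. apply constructive_indefinite_description.
   assert (Hpos : 0 < / INR (S n)) by (apply Rinv_0_lt_compat, lt_0_INR; lia).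
   destruct (Hl (disc l (mkposreal _ Hpos)) N) as [p [Hp Hd]].
   - exists (mkposreal _ Hpos). intros x Hx; exact Hx.
   - exists p. split; auto. }
 set (phi := fix phi n := match n with O => proj1_sig (Hs O O) | S m => proj1_sig (Hs (S m) (S (phi m))) end).
 assert (Hphi1 : forall n, Rabs (u (phi n) - l) < / INR (S n)).
 { intros [|n]; simpl. exact (proj2 (proj2_sig (Hs O O))). exact (proj2 (proj2_sig (Hs (S n) _))). }
 exists phi, l. split.
 - intro n. destruct (proj2_sig (Hs (S n) (S (phi n)))) as [H1 _]. change (phi n < proj1_sig (Hs (S n) (S (phi n))))%nat. lia.
 - intros eps He. destruct (archimed_cor1 eps He) as [N [HN HN0]]. exists N. intros n Hn.
   eapply Rlt_le_trans. apply Hphi1. eapply Rle_trans; [|left; exact HN].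
   apply Rinv_le_contravar. apply lt_0_INR; lia. apply le_INR; lia.
Qed.

Lemma extract_C (X : nat -> C) : (forall n, Cmod (X n) <= 1) ->
  exists (phi : nat -> nat) x0, (forall n, (n <= phi n)%nat) /\
   forall eps, 0 < eps -> exists N, forall n, (N <= n)%nat -> Cmod (Cminus (X (phi n)) x0) < eps.
Proof.
 intros HX.
 assert (Hb : forall n, Rabs (fst (X n)) <= 1 /\ Rabs (snd (X n)) <= 1).
 { intro n. pose proof (Rmax_Cmod (X n)). pose proof (Rmax_l (Rabs (fst (X n))) (Rabs (snd (X n)))).
   pose proof (Rmax_r (Rabs (fst (X n))) (Rabs (snd (X n)))). specialize (HX n). split; lra. }
 destruct (extract_R (fun n => fst (X n))) as [phi1 [a [Hp1 Ha]]].
 { intro n. destruct (Hb n) as [H _]. apply Rabs_le_between in H. lra. }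
 destruct (extract_R (fun n => snd (X (phi1 n)))) as [phi2 [b [Hp2 Hb2]]].
 { intro n. destruct (Hb (phi1 n)) as [_ H]. apply Rabs_le_between in H. lra. }
 exists (fun n => phi1 (phi2 n)), (a, b). split.
 - intro n. pose proof (incr_ge _ Hp2 n). pose proof (incr_mono _ Hp1 _ _ H). pose proof (incr_ge _ Hp1 (phi2 n)). lia.
 - intros eps He. destruct (Ha (eps/2) ltac:(lra)) as [N1 HN1]. destruct (Hb2 (eps/2) ltac:(lra)) as [N2 HN2].
   exists (Nat.max N1 N2). intros n Hn.
   specialize (HN2 n ltac:(lia)). specialize (HN1 (phi2 n) ltac:(pose proof (incr_ge _ Hp2 n); lia)).
   simpl in HN1, HN2.
   eapply Rle_lt_trans. apply Cmod_2Rmax. simpl.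
   assert (Hs2 : sqrt 2 < 2) by (pose proof (sqrt_pos 2); pose proof (sqrt_sqrt 2 ltac:(lra)); nra).
   assert (Rmax (Rabs (fst (X (phi1 (phi2 n))) - a)) (Rabs (snd (X (phi1 (phi2 n))) - b)) < eps/2).
   { apply Rmax_lub_lt; auto. }
   assert (0 <= Rmax (Rabs (fst (X (phi1 (phi2 n))) - a)) (Rabs (snd (X (phi1 (phi2 n))) - b))).
   { eapply Rle_trans. apply Rabs_pos. apply Rmax_l. }
   pose proof (sqrt_pos 2). unfold Rminus in *. nra.
Qed.

Lemma pow_le_1 c j : 0 <= c <= 1 -> c ^ j <= 1.
Proof. intros H; induction j; simpl. lra. pose proof (pow_le c j (proj1 H)). nra. Qed.

Lemma pow_diff_bound a b j : Cmod a <= 1 -> Cmod b <= 1 ->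
  Cmod (Cminus (Cpow a j) (Cpow b j)) <= INR j * Cmod (Cminus a b).
Proof.
 intros Ha Hb. induction j.
 - simpl. replace (Cminus (RtoC 1) (RtoC 1)) with (RtoC 0) by ring. rewrite Cmod_0. lra.
 - rewrite !Cpow_S.
   replace (Cminus (Cmult a (Cpow a j)) (Cmult b (Cpow b j))) with
     (Cplus (Cmult a (Cminus (Cpow a j) (Cpow b j))) (Cmult (Cminus a b) (Cpow b j))) by ring.
   eapply Rle_trans. apply Cmod_triangle. rewrite !Cmod_mult, Cmod_pow, S_INR.
   pose proof (pow_le_1 (Cmod b) j (conj (Cmod_ge_0 b) Hb)). pose proof (pow_le (Cmod b) j (Cmod_ge_0 b)).
   pose proof (Cmod_ge_0 a). pose proof (Cmod_ge_0 (Cminus a b)). pose proof (Cmod_ge_0 (Cminus (Cpow a j) (Cpow b j))).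
   nra.
Qed.

Lemma attain V f : compactA V -> (forall h, V h -> inA0 h) -> V f -> f <> e_fun ->
 exists g x, V g /\ Cmod x <= 1 /\ f = P x g /\ x <> RtoC 0 /\
  forall h y, V h -> Cmod y <= 1 -> f = P y h -> Cmod x <= Cmod y.
Proof.
 intros HC HV Vf Hne.
 set (E := fun s => exists h y, V h /\ Cmod y <= 1 /\ f = P y h /\ s = - Cmod y).
 assert (Hb : bound E). { exists 0. intros s [h [y [_ [_ [_ ->]]]]]. pose proof (Cmod_ge_0 y); lra. }
 assert (Hne' : exists s, E s). { exists (- Cmod (RtoC 1)). exists f, (RtoC 1). rewrite P_one, Cmod_1. repeat split; auto; lra. }
 destruct (completeness E Hb Hne') as [m [Hub Hlub]].
 set (t := - m).
 assert (Ht : forall h y, V h -> Cmod y <= 1 -> f = P y h -> t <= Cmod y).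
 { intros h y Vh Hy E1. assert (H : E (- Cmod y)) by (exists h, y; auto). specialize (Hub _ H). unfold t; lra. }
 assert (Hseq : forall n : nat, {p : coef * C | V (fst p) /\ Cmod (snd p) <= 1 /\ f = P (snd p) (fst p) /\ Cmod (snd p) < t + / INR (S n)}).
 { intro n. apply constructive_indefinite_description. apply NNPP; intro C.
   assert (Hpos : 0 < / INR (S n)) by (apply Rinv_0_lt_compat, lt_0_INR; lia).
   assert (H : is_upper_bound E (m - / INR (S n))).
   { intros s [h [y [Vh [Hy [E1 ->]]]]]. apply Rnot_lt_le. intro. apply C. exists (h, y). cbn [fst snd]. repeat split; auto. unfold t; lra. }
   specialize (Hlub _ H). lra. }
 set (H := fun n => fst (proj1_sig (Hseq n))). set (X := fun n => snd (proj1_sig (Hseq n))).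
 assert (HH : forall n, V (H n) /\ Cmod (X n) <= 1 /\ f = P (X n) (H n) /\ Cmod (X n) < t + / INR (S n)) by (intro n; exact (proj2_sig (Hseq n))).
 destruct (extract_C X (fun n => proj1 (proj2 (HH n)))) as [phi [x0 [Hphi Hconv]]].
 destruct (cluster V (fun n => H (phi n)) HC (fun n => proj1 (HH (phi n)))) as [g [Vg Hg]].
 assert (Hx1 : Cmod x0 <= 1).
 { apply le_eps. intros eps He. destruct (Hconv eps He) as [N HN]. specialize (HN N (le_n _)).
   pose proof (proj1 (proj2 (HH (phi N)))).
   replace x0 with (Cplus (X (phi N)) (Copp (Cminus (X (phi N)) x0))) by ring.
   eapply Rle_lt_trans. apply Cmod_triangle. rewrite Cmod_opp. lra. }
 assert (Hxt : Cmod x0 <= t).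
 { apply le_eps. intros eps He. destruct (Hconv (eps/2) ltac:(lra)) as [N HN].
   destruct (archimed_cor1 (eps/2) ltac:(lra)) as [N2 [HN2 HN2']].
   set (n := Nat.max N N2). specialize (HN n ltac:(unfold n; lia)).
   pose proof (proj2 (proj2 (proj2 (HH (phi n))))).
   assert (/ INR (S (phi n)) <= / INR N2). { apply Rinv_le_contravar. apply lt_0_INR; lia. apply le_INR. specialize (Hphi n). unfold n in *; lia. }
   replace x0 with (Cplus (X (phi n)) (Copp (Cminus (X (phi n)) x0))) by ring.
   eapply Rle_lt_trans. apply Cmod_triangle. rewrite Cmod_opp. lra. }
 assert (Hcoef : forall j, f j = Cmult (Cpow x0 j) (g j)).
 { intro j.
   assert (Hz : Cmod (Cminus (f j) (Cmult (Cpow x0 j) (g j))) = 0).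
   { apply Rle_antisym; [|apply Cmod_ge_0]. apply le_eps. intros eps He. rewrite Rplus_0_l.
     set (K := 1 + INR j * Cmod (g j)).
     assert (HK : 0 < K) by (unfold K; pose proof (pos_INR j); pose proof (Cmod_ge_0 (g j)); nra).
     set (δ := eps / (2 * K)).
     assert (Hδ : 0 < δ) by (unfold δ; apply Rdiv_lt_0_compat; lra).
     assert (HδK : δ * K = eps / 2) by (unfold δ; field; lra).
     destruct (coef_cont g j δ (proj1 (HV g Vg)) Hδ) as [r [e0 [Hr [He0 Hcc]]]].
     destruct (Hconv δ Hδ) as [N HN].
     destruct (Hg r e0 N Hr He0) as [n [Hn Hnear]].
     specialize (HN n Hn). specialize (Hcc (H (phi n)) (proj1 (HV _ (proj1 (HH (phi n))))) Hnear).
     destruct (HH (phi n)) as [_ [HXn [Ef _]]].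
     assert (Efj : f j = Cmult (Cpow (X (phi n)) j) (H (phi n) j)) by (rewrite Ef; reflexivity).
     rewrite Efj.
     replace (Cminus (Cmult (Cpow (X (phi n)) j) (H (phi n) j)) (Cmult (Cpow x0 j) (g j)))
       with (Cplus (Cmult (Cpow (X (phi n)) j) (Cminus (H (phi n) j) (g j))) (Cmult (Cminus (Cpow (X (phi n)) j) (Cpow x0 j)) (g j))) by ring.
     eapply Rle_lt_trans. apply Cmod_triangle. rewrite !Cmod_mult, Cmod_pow.
     pose proof (pow_diff_bound (X (phi n)) x0 j HXn Hx1).
     pose proof (pow_le_1 (Cmod (X (phi n))) j (conj (Cmod_ge_0 _) HXn)).
     pose proof (pow_le (Cmod (X (phi n))) j (Cmod_ge_0 _)).
     pose proof (Cmod_ge_0 (g j)). pose proof (pos_INR j).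
     pose proof (Cmod_ge_0 (Cminus (H (phi n) j) (g j))).
     pose proof (Cmod_ge_0 (Cminus (Cpow (X (phi n)) j) (Cpow x0 j))).
     assert (A1 : Cmod (X (phi n)) ^ j * Cmod (Cminus (H (phi n) j) (g j)) <= δ) by nra.
     assert (A2 : Cmod (Cminus (Cpow (X (phi n)) j) (Cpow x0 j)) <= INR j * δ) by nra.
     assert (A3 : Cmod (Cminus (Cpow (X (phi n)) j) (Cpow x0 j)) * Cmod (g j) <= INR j * δ * Cmod (g j)) by nra.
     unfold K in HδK. nra. }
   replace (f j) with (Cplus (Cminus (f j) (Cmult (Cpow x0 j) (g j))) (Cmult (Cpow x0 j) (g j))) by ring.
   rewrite (Cmod_eq_0 _ Hz). ring. }
 assert (Ef : f = P x0 g) by (apply functional_extensionality; intro j; apply Hcoef).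
 exists g, x0. split; auto. split; auto. split; auto. split.
 - intro E0. apply Hne. rewrite Ef, E0. apply P_zero. apply (HV g Vg).
 - intros h y Vh Hy E1. pose proof (Ht h y Vh Hy E1). lra.
Qed.

Theorem lemma6 (V : coef -> Prop) :
  compactA V -> (forall f, V f -> inA0 f) ->
  (forall f, V f -> exists (g : coef) (x : C), bor V g /\ Cmod x <= 1 /\ f = P x g) /\
  (forall (f g h : coef) (x y : C), V f -> f <> e_fun ->
     bor V g -> bor V h -> Cmod x <= 1 -> Cmod y <= 1 ->
     f = P x g -> f = P y h ->
     exists u : C, Cmod u = 1 /\ h = P u g).
Proof.
 intros HC HV. split; [|apply part2; auto].
 intros f Vf.
 assert (Hbor : forall g x, V g -> Cmod x <= 1 -> x <> RtoC 0 -> ~ is_e_singleton V ->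
           (forall h y, V h -> Cmod y <= 1 -> P x g = P y h -> Cmod x <= Cmod y) -> bor V g).
 { intros g x Vg Hx Hx0 Hs Hmin. right. split; auto. split; auto.
   intros h y Vh Hy Eg.
   assert (H1 : Cmod x <= Cmod (Cmult x y)).
   { apply (Hmin h (Cmult x y) Vh). apply Cmod_mult_le1; auto. rewrite Eg, P_comp. reflexivity. }
   rewrite Cmod_mult in H1. assert (0 < Cmod x) by (apply Cmod_gt_0; auto).
   apply Rle_antisym; auto. apply Rmult_le_reg_l with (Cmod x); auto. lra. }
 destruct (classic (is_e_singleton V)) as [Hs|Hs].
 - exists e_fun, (RtoC 0). rewrite (proj1 (Hs f) Vf). split. left; auto. split. rewrite Cmod_0; lra.
   symmetry; apply P_zero; reflexivity.
 - destruct (classic (f = e_fun)) as [Ef|Ef].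
   + assert (Hex : exists h, V h /\ h <> e_fun).
     { apply NNPP; intro C. apply Hs. intro h. split.
       - intros Vh. apply NNPP; intro; apply C; eauto.
       - intros ->. rewrite <- Ef; auto. }
     destruct Hex as [h [Vh Hh]]. destruct (attain V h HC HV Vh Hh) as [g [x [Vg [Hx [Eh [Hx0 Hmin]]]]]].
     exists g, (RtoC 0). split.
     * apply (Hbor g x Vg Hx Hx0 Hs). intros h' y Vh' Hy E. apply (Hmin h' y Vh' Hy). rewrite Eh; exact E.
     * split. rewrite Cmod_0; lra. rewrite Ef. symmetry. apply P_zero. apply (HV g Vg).
   + destruct (attain V f HC HV Vf Ef) as [g [x [Vg [Hx [Eh [Hx0 Hmin]]]]]].
     exists g, x. split; [|split; auto].
     apply (Hbor g x Vg Hx Hx0 Hs). intros h' y Vh' Hy E. apply (Hmin h' y Vh' Hy). rewrite Eh; exact E.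
Qed.
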